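(* Let $d\ge 2$. There are a constant $C>0$ and $n_0(d)$ depending only on $d$ such that for all $n\ge n_0(d)$: if $\mathcal{F}$, $B_i$ are as in the context, $J\subseteq[n]$ with $|J|\le n/4$, and $K\ge 0$ is a real number with $|E(\mathcal{G}_J)|\ge\binom{n-|J|}{d}-Kn$, then $|\mathcal{T}_J^1|\le CK$.
   Context: Let $\mathcal{F}=\{F_1,\dots,F_m\}\subseteq\binom{[n]}{d+1}$ consist of distinct sets and have VC-dimension at most $d$ (no $(d+1)$-set $S$ is shattered, i.e. no $S$ such that every $A\subseteq S$ equals $F\cap S$ for some $F\in\mathcal{F}$). For $i\in[m]$, call $B\subsetneq F_i$ admissible for $F_i$ if $F\cap F_i\neq B$ for every $F\in\mathcal{F}$. For each $i$, $B_i$ is a fixed admissible set for $F_i$ of maximum cardinality among all admissible sets. For $J\subseteq[n]$, $\mathcal{G}_J$ is the $d$-uniform hypergraph on vertex set $[n]\setminus J$ with edge set $E(\mathcal{G}_J):=\{F_k\setminus J: k\in[m],\ |F_k\cap J|=1\}$. $\mathcal{T}_J^1$ is the set of $F_k\in\mathcal{F}$ with $F_k\subseteq[n]\setminus J$, $B_k\subseteq[n]\setminus J$ and $|B_k|=d-1$. *)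

(* Defs.v *)
From mathcomp Require Import all_boot.
From Stdlib Require Import Reals.
Set Implicit Arguments. Unset Strict Implicit. Unset Printing Implicit Defensive.

Section VC.
Variables (n m : nat) (F : 'I_m -> {set 'I_n}).

Definition shattered (S : {set 'I_n}) : Prop :=
  forall A : {set 'I_n}, A \subset S -> exists k : 'I_m, F k :&: S = A.

Definition vc_dim_le (d : nat) : Prop :=
  forall S : {set 'I_n}, #|S| = d.+1 -> ~ shattered S.

Definition admissible (i : 'I_m) (B : {set 'I_n}) : Prop :=
  B \proper F i /\ forall k : 'I_m, F k :&: F i <> B.

Definition edges_G (J : {set 'I_n}) : {set {set 'I_n}} :=
  [set F k :\: J | k in [pred k : 'I_m | #|F k :&: J| == 1]].

Definition T1 (B : 'I_m -> {set 'I_n}) (d : nat) (J : {set 'I_n}) : {set {set 'I_n}} :=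
  [set F k | k in [pred k : 'I_m | (F k \subset ~: J) && (B k \subset ~: J)
                                    && (#|B k| == d.-1)]].
End VC.

(* Main.v *)
Require Import Defs.
From mathcomp Require Import all_boot zify.
From Stdlib Require Import Reals Lra.
Set Implicit Arguments. Unset Strict Implicit. Unset Printing Implicit Defensive.

Lemma trace_ex n m (F : 'I_m -> {set 'I_n}) (B : 'I_m -> {set 'I_n}) i (A : {set 'I_n}) :
  (forall i B', admissible F i B' -> (#|B'| <= #|B i|)%N) ->
  A \proper F i -> (#|B i| < #|A|)%N -> exists f, F f :&: F i = A.
Proof.
move=> Hmax HA Hc.
case: (pickP [pred k | F k :&: F i == A]) => [f /eqP Hf | H]; first by exists f.
have : admissible F i A by split => // k Hk; move: (H k); rewrite /= Hk eqxx.
by move/Hmax; rewrite leqNgt Hc.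
Qed.

Lemma card3 n (Bs : {set 'I_n}) y z z' :
  y \notin Bs -> z \notin Bs -> z' \notin Bs -> y != z -> y != z' -> z != z' ->
  #|y |: (z |: (z' |: Bs))| = (#|Bs| + 3)%N.
Proof.
move=> hy hz hz' yz yz' zz'.
rewrite !cardsU1 !in_setU1 (negbTE hy) (negbTE hz) (negbTE hz') (negbTE yz) (negbTE yz') (negbTE zz') /=.
lia.
Qed.

Lemma ex_out (T : finType) (X Y : {set T}) : Y \subset X -> X <> Y -> exists z, z \in X /\ z \notin Y.
Proof.
move=> YX XY; case: (boolP (X \subset Y)) => h.
  by exfalso; apply: XY; apply/eqP; rewrite eqEsubset h.
by case/subsetPn: h => z h1 h2; exists z.
Qed.

Lemma arith1 d : (1 <= d)%N -> (d.-1 + 3 <= d.+1)%N -> False.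
Proof. lia. Qed.

Lemma Sbound d n m (F : 'I_m -> {set 'I_n}) (B : 'I_m -> {set 'I_n}) (B0 : {set 'I_n}) :
 (1 <= d)%N -> injective F -> (forall i, #|F i| = d.+1) ->
 (forall i, admissible F i (B i)) ->
 (forall i B', admissible F i B' -> (#|B'| <= #|B i|)%N) -> #|B0| = d.-1 ->
 (#|[set k | B k == B0]| <= expn 2 (3 * d.+1))%N.
Proof.
move=> d1 Finj Fc Adm Hmax HB0.
case: (set_0Vmem [set k | B k == B0]) => [-> | [i]]; first by rewrite cards0.
rewrite inE => /eqP Bi.
have [Bpr Btr] := Adm i.
have Bsub : B0 \subset F i by rewrite -Bi; exact: proper_sub.
have : (0 < #|F i :\: B0|)%N.
  have := cardsID B0 (F i); rewrite (setIidPr Bsub) HB0 Fc; lia.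
case/card_gt0P => a; rewrite inE => /andP [aB aF].
pose A1 := a |: B0. pose A2 := F i :\ a.
have cA1 : #|A1| = d by rewrite cardsU1 aB HB0 /=; lia.
have cA2 : #|A2| = d by rewrite /A2; have := cardsD1 a (F i); rewrite aF Fc /=; lia.
have [f Hf] : exists f, F f :&: F i = A1.
  apply: (trace_ex Hmax); last by rewrite Bi cA1 HB0; lia.
  rewrite properEcard cA1 Fc leqnn andbT subUset sub1set aF Bsub //.
have [g Hg] : exists g, F g :&: F i = A2.
  apply: (trace_ex Hmax); last by rewrite Bi cA2 HB0; lia.
  rewrite properEcard cA2 Fc leqnn andbT subsetDl //.
pose U := F i :|: F f :|: F g.
have B0f : B0 \subset F f.
  apply: (subset_trans _ (subsetIl (F f) (F i))); rewrite Hf; exact: subsetUr.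
have B0g : B0 \subset F g.
  apply: (subset_trans _ (subsetIl (F g) (F i))); rewrite Hg.
  apply/subsetP => x xB; rewrite !inE (subsetP Bsub x xB) andbT.
  by apply/eqP => e; move: aB; rewrite -e xB.
have Hz : forall j l, B j = B0 -> B0 \subset F l ->
    exists z, z \in F l /\ z \in F j /\ z \notin B0.
  move=> j l Bj Bl; have [_ Htr] := Adm j.
  have [z [z1 z2]] := @ex_out _ (F l :&: F j) B0 ltac:(rewrite subsetI Bl -Bj; exact: proper_sub (proj1 (Adm j))) ltac:(rewrite -Bj; exact: Htr l).
  by move: z1; rewrite inE => /andP [h1 h2]; exists z.
have key : forall j, B j = B0 -> F j \subset U.
  move=> j Bj; apply/subsetP => y Hy; apply/negPn/negP => Hny.
  have fin : forall z z', z \in F j -> z' \in F j -> z \in U -> z' \in U ->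
      z \notin B0 -> z' \notin B0 -> z != z' -> False.
    move=> z z' zj z'j zU z'U zB z'B zz'.
    have sub : y |: (z |: (z' |: B0)) \subset F j.
      rewrite !subUset !sub1set Hy zj z'j -Bj proper_sub //; exact: (proj1 (Adm j)).
    have := subset_leq_card sub.
    have yB : y \notin B0 by apply/negP => yB; move: Hny; rewrite /U !in_setU (subsetP Bsub y yB).
    rewrite card3 //; last first.
    - by apply/eqP => e; move: Hny; rewrite e z'U.
    - by apply/eqP => e; move: Hny; rewrite e zU.
    by rewrite HB0 Fc; apply: arith1.
  have [z1 [z1i [z1j z1B]]] := Hz j i Bj Bsub.
  have [z2 [z2f [z2j z2B]]] := Hz j f Bj B0f.
  have [z3 [z3g [z3j z3B]]] := Hz j g Bj B0g.
  have nb : ~~ ((z1 \in F f) && (z1 \in F g)).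
    apply/negP => /andP [h1 h2].
    have e1 : z1 \in A1 by rewrite -Hf inE h1 z1i.
    have e2 : z1 \in A2 by rewrite -Hg inE h2 z1i.
    move: e1 e2; rewrite !inE (negbTE z1B) orbF => /eqP ->; by rewrite eqxx.
  have z1U : z1 \in U by rewrite !inE z1i.
  case: (boolP (z1 \in F f)) => h.
  - move: nb; rewrite h /= => h3.
    apply: (fin z1 z3) => //; first by rewrite !inE z3g orbT.
    by apply/eqP => e; move: h3; rewrite e z3g.
  - apply: (fin z1 z2) => //; first by rewrite !inE z2f orbT.
    by apply/eqP => e; move: h; rewrite e z2f.
have cU : (#|U| <= 3 * d.+1)%N.
  rewrite /U; have := cardsUI (F i :|: F f) (F g); have := cardsUI (F i) (F f).
  rewrite !Fc; lia.
apply: (@leq_trans #|[set k | F k \subset U]|).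
  by apply: subset_leq_card; apply/subsetP => k; rewrite !inE => /eqP /key ->.
rewrite -(card_imset _ Finj).
apply: (@leq_trans #|powerset U|).
  by apply: subset_leq_card; apply/subsetP => X /imsetP [k]; rewrite !inE => kU ->.
by rewrite card_powerset; apply: leq_pexp2l.
Qed.
Lemma sumb (T : finType) (A : {pred T}) (P : pred T) :
  (\sum_(i in A) (P i : nat) = #|[set i in A | P i]|)%N.
Proof.
rewrite -sum1_card [RHS]big_mkcond [LHS]big_mkcond; apply: eq_bigr => i _.
by rewrite inE; case: (i \in A); case: (P i).
Qed.


Lemma missing n m (F : 'I_m -> {set 'I_n}) (B : 'I_m -> {set 'I_n}) d J k x :
  (1 <= d)%N -> admissible F k (B k) -> F k \subset ~: J -> B k \subset ~: J -> #|B k| = d.-1 ->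
  x \in ~: J -> x \notin F k ->
  x |: B k \in [set D : {set 'I_n} | (D \subset ~: J) && (#|D| == d) && (D \notin edges_G F J)].
Proof.
move=> d1 [Bpr Btr] FJ BJ Bc xJ xF.
have xB : x \notin B k by apply: contra xF; apply: (subsetP (proper_sub Bpr)).
rewrite inE subUset sub1set xJ BJ cardsU1 xB Bc /=.
apply/andP; split; first by apply/eqP; lia.
apply/negP => /imsetP [j _ Ej].
apply: (Btr j); apply/setP => y; rewrite inE.
case: (boolP (y \in F k)) => yk; last first.
  by rewrite andbF; apply/esym/negbTE; apply: contra yk; apply: (subsetP (proper_sub Bpr)).
have yJ : y \notin J by have := subsetP FJ y yk; rewrite inE.
have -> : (y \in F j) = (y \in F j :\: J) by rewrite inE yJ.
rewrite -Ej inE andbT.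
rewrite in_set1.
case: (eqVneq y x) => [e|//]; by move: xF; rewrite -e yk.
Qed.


Lemma Dbound d n m (F : 'I_m -> {set 'I_n}) (B : 'I_m -> {set 'I_n}) (I : {set 'I_m}) (D : {set 'I_n}) :
 (1 <= d)%N -> injective F -> (forall i, #|F i| = d.+1) ->
 (forall i, admissible F i (B i)) ->
 (forall i B', admissible F i B' -> (#|B'| <= #|B i|)%N) ->
 (forall k, k \in I -> #|B k| = d.-1) -> #|D| = d ->
 (#|[set k in I | B k \subset D]| <= d * expn 2 (3 * d.+1))%N.
Proof.
move=> d1 Finj Fc Adm Hmax HI HD.
rewrite -sum1_card.
apply: (@leq_trans (\sum_(k in [set k in I | B k \subset D]) \sum_(x in D) (B k == D :\ x : nat))).
  apply: leq_sum => k; rewrite !inE => /andP [kI BD].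
  have Bc := HI k kI.
  have [x [xD xB]] : exists x, x \in D /\ x \notin B k.
    apply: ex_out => // e; move: Bc; rewrite -e HD; lia.
  rewrite (bigD1 x) //=.
  have -> : (B k == D :\ x) = true.
    rewrite eqEcard; apply/andP; split.
      apply/subsetP => y yB; rewrite !inE (subsetP BD y yB) andbT.
      by apply/eqP => e; move: xB; rewrite -e yB.
    have := cardsD1 x D; rewrite xD HD Bc /=; lia.
  by [].
rewrite exchange_big /=.
apply: (@leq_trans (\sum_(x in D) expn 2 (3 * d.+1))); last by rewrite sum_nat_const HD.
apply: leq_sum => x xD; rewrite sumb.
apply: (@leq_trans #|[set k | B k == D :\ x]|).
  by apply: subset_leq_card; apply/subsetP => k; rewrite !inE => /andP [_ ->].
apply: (Sbound d1 Finj Fc Adm Hmax).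
have := cardsD1 x D; rewrite xD HD /= => ->; by rewrite add1n.
Qed.

Lemma count_main d n m (F : 'I_m -> {set 'I_n}) (B : 'I_m -> {set 'I_n}) (J : {set 'I_n}) :
 (1 <= d)%N -> injective F -> (forall i, #|F i| = d.+1) ->
 (forall i, admissible F i (B i)) ->
 (forall i B', admissible F i B' -> (#|B'| <= #|B i|)%N) ->
 (#|[set k | (F k \subset ~: J) && (B k \subset ~: J) && (#|B k| == d.-1)]| * (#|~: J| - d.+1)
  <= #|[set D : {set 'I_n} | (D \subset ~: J) && (#|D| == d) && (D \notin edges_G F J)]|
     * (d * expn 2 (3 * d.+1)))%N.
Proof.
move=> d1 Finj Fc Adm Hmax.
set I := [set k | _]. set M := [set D : {set 'I_n} | _].
have step1 : forall k, k \in I -> (#|~:J| - d.+1 <= #|[set D in M | B k \subset D]|)%N.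
  move=> k; rewrite inE => /andP [/andP [FJ BJ] /eqP Bc].
  apply: (@leq_trans #|~:J :\: F k|).
    by rewrite cardsD (setIidPr FJ) Fc.
  have Bsub : B k \subset F k by apply: proper_sub (proj1 (Adm k)).
  rewrite -(@card_in_imset _ _ (fun x => x |: B k)); last first.
    move=> x y; rewrite !inE => /andP [xF _] /andP [yF _] e.
    have : x \in y |: B k by rewrite -e setU11.
    rewrite in_setU1 => /orP [/eqP //|xB].
    by move: xF; rewrite (subsetP Bsub x xB).
  apply: subset_leq_card; apply/subsetP => D /imsetP [x /setDP [xJ xF] ->].
  by rewrite inE (missing d1 (Adm k) FJ BJ Bc xJ xF) subsetUr.
have HI : forall k, k \in I -> #|B k| = d.-1.
  by move=> k; rewrite inE => /andP [_ /eqP].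
rewrite -!sum_nat_const.
apply: (@leq_trans (\sum_(k in I) \sum_(D in M) (B k \subset D : nat))).
  by apply: leq_sum => k kI; rewrite sumb; apply: step1.
rewrite exchange_big /=.
apply: leq_sum => D; rewrite inE => /andP [/andP [_ /eqP HD] _].
rewrite sumb; exact: (Dbound d1 Finj Fc Adm Hmax HI HD).
Qed.

Lemma arith2 (n J d N : nat) : (4 * J <= n)%N -> (4 * d.+1 <= n)%N -> N = (n - J - d.+1)%N ->
  (n <= 2 * N)%N /\ (0 < N)%N.
Proof. lia. Qed.

Lemma real_fin (a N mM e bC c n : nat) (K : R) :
  (a * N <= mM * c)%N -> (mM + e)%N = bC -> (n <= 2 * N)%N -> (0 < N)%N ->
  (INR bC - K * INR n <= INR e)%R -> (0 <= K)%R ->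
  (INR a <= 2 * INR c * K)%R.
Proof.
move=> h1 h2 h3 h4 h5 K0.
have r1 : (INR a * INR N <= INR mM * INR c)%R by rewrite -!mult_INR; apply: le_INR; apply/leP.
have r2 : (INR mM + INR e = INR bC)%R by rewrite -h2 -[addn mM e]/(Nat.add mM e) plus_INR.
have r3 : (INR n <= 2 * INR N)%R by apply: (Rle_trans _ _ _ (le_INR _ _ (leP h3))); rewrite -[muln 2 N]/(Nat.mul 2 N) mult_INR; simpl; lra.
have r4 : (0 < INR N)%R by apply: lt_0_INR; apply/ltP.
have c0 : (0 <= INR c)%R by apply: pos_INR.
have r5 : (INR mM <= 2 * K * INR N)%R by nra.
apply: (Rmult_le_reg_r (INR N)) => //. nra.
Qed.

Theorem claim3p8 :
  forall d : nat, (2 <= d)%N ->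
  exists (C : R) (n0 : nat), (0 < C)%R /\
  forall (n m : nat) (F : 'I_m -> {set 'I_n}) (B : 'I_m -> {set 'I_n})
         (J : {set 'I_n}) (K : R),
    (n0 <= n)%N ->
    injective F ->
    (forall i : 'I_m, #|F i| = d.+1) ->
    vc_dim_le F d ->
    (forall i : 'I_m, admissible F i (B i)) ->
    (forall (i : 'I_m) (B' : {set 'I_n}), admissible F i B' -> (#|B'| <= #|B i|)%N) ->
    (4 * #|J| <= n)%N ->
    (0 <= K)%R ->
    (INR 'C(n - #|J|, d) - K * INR n <= INR #|edges_G F J|)%R ->
    (INR #|T1 F B d J| <= C * K)%R.
Proof.
move=> d d2; have d1 : (1 <= d)%N by apply: leq_trans d2.
exists (2 * INR (d * expn 2 (3 * d.+1)))%R, (4 * d.+1)%N; split.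
  apply: Rmult_lt_0_compat; first lra.
  by apply: lt_0_INR; apply/ltP; rewrite muln_gt0 expn_gt0 d1.
move=> n m F B J K Hn Finj Fc _ Adm Hmax HJ K0 HE.
have Hc := count_main J d1 Finj Fc Adm Hmax.
set I := [set k | _] in Hc. set M := [set D : {set 'I_n} | _] in Hc.
have cJ : #|~: J| = (n - #|J|)%N by rewrite cardsCs setCK card_ord.
have [h3 h4] := @arith2 n #|J| d (#|~: J| - d.+1) HJ Hn ltac:(by rewrite cJ).
have hT : (#|T1 F B d J| <= #|I|)%N.
  apply: leq_trans (leq_imset_card _ _) _.
  by apply: subset_leq_card; apply/subsetP => k; rewrite !inE.
have hE : (#|M| + #|edges_G F J|)%N = 'C(n - #|J|, d).
  have sub : edges_G F J \subset [set D : {set 'I_n} | D \subset ~: J & #|D| == d].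
    apply/subsetP => D /imsetP [k kP ->]; rewrite inE; apply/andP; split.
      by apply/subsetP => x; rewrite !inE => /andP [].
    move: kP; rewrite inE => /eqP h1.
    have := cardsID J (F k); rewrite h1 Fc => h2.
    by apply/eqP; move: h2; rewrite add1n => -[].
  rewrite -cJ -cards_draws -[RHS](cardsID (edges_G F J)) (setIidPr sub) addnC.
  congr (_ + _)%N; apply: eq_card => D; rewrite !inE.
  by case: (D \subset ~: J); case: (#|D| == d); case: (D \in edges_G F J).
apply: (Rle_trans _ _ _ (le_INR _ _ (leP hT))).
exact: (real_fin Hc hE h3 h4 HE K0).
Qed.
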